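(* Let $X\in\tilde{\mathcal{A}}_{conv.}$ and $\lambda\in\mathbb{C}$. Then there exist a unique $Q\in\tilde{\mathcal{A}}_{conv.}$ and a unique $R\in B$ such that $X=Q(a-\lambda b)+R$ in $\tilde{\mathcal{A}}_{conv.}$.
   Context: $\widehat{\mathcal{A}}$ is the algebra of formal power series $\sum_{p,q\ge0}\gamma_{p,q}a^pb^q$ in variables $a,b$ with $ab-ba=b^2$ (the $(a,b)$-adic completion of the polynomial algebra with this relation). $\tilde{\mathcal{A}}_{conv.}\subset\widehat{\mathcal{A}}$ is the subalgebra of series with $|\gamma_{p,q}|\le C_RR^{p+q}q!$ for some $R>1$, $C_R>0$. $B=\mathbb{C}\{\{b\}\}\subset\tilde{\mathcal{A}}_{conv.}$ is the subalgebra of series $\sum c_qb^q$ with $|c_q|\le CR^qq!$ for some $C,R$. *)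

(* Defs.v *)
From HB Require Import structures.
From mathcomp Require Import all_boot all_order all_algebra.
From mathcomp Require Import reals.
From mathcomp.real_closed Require Import complex.
Set Implicit Arguments. Unset Strict Implicit. Unset Printing Implicit Defensive.
Import Order.TTheory GRing.Theory Num.Theory.
Local Open Scope ring_scope.
Local Open Scope complex_scope.

Section Alg.
Variable R : realType.

(* An element sum_{p,q} g p q a^p b^q of \hat A (normal ordering a^p b^q). *)
Definition series := nat -> nat -> R[i].

(* coefficient of a^(m-k) b^(n+k) in the reordering of b^n a^m:
   b^n a^m = sum_k (-1)^k C(m,k) n(n+1)...(n+k-1) a^(m-k) b^(n+k),
   a consequence of ab - ba = b^2 (i.e. b^n a = a b^n - n b^(n+1)). *)
Definition reord (n m k : nat) : R[i] :=
  (-1) ^+ k * ('C(m, k))%:R * (\prod_(i < k) (n + i))%:R.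

Definition sadd (X Y : series) : series := fun p q => X p q + Y p q.

(* product in \hat A: a^p1 b^q1 . a^p2 b^q2
   = sum_k reord q1 p2 k a^(p1+p2-k) b^(q1+k+q2); for target (p,q) we have
   p2 = p - p1 + k with p1 <= p, and q1 + q2 + k = q. *)
Definition smul (X Y : series) : series := fun p q =>
  \sum_(p1 < p.+1) \sum_(q1 < q.+1) \sum_(q2 < q.+1) \sum_(k < q.+1)
    if (q1 + q2 + k == q)%N then
      X p1 q1 * Y (p - p1 + k)%N q2 * reord q1 (p - p1 + k) k
    else 0.

Definition sa : series := fun p q => if (p == 1%N) && (q == 0%N) then 1 else 0.
Definition sb : series := fun p q => if (p == 0%N) && (q == 1%N) then 1 else 0.

Definition a_minus_lb (l : R[i]) : series := fun p q => sa p q - l * sb p q.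

Definition in_Aconv (X : series) : Prop :=
  exists (r c : R), 1 < r /\ 0 < c /\
    forall p q : nat, `|X p q| <= (c * r ^+ (p + q) * (q`!)%:R)%:C.

Definition in_B (X : series) : Prop :=
  (forall p q : nat, (0 < p)%N -> X p q = 0) /\
  exists (c r : R), forall q : nat, `|X 0%N q| <= (c * r ^+ q * (q`!)%:R)%:C.

End Alg.

(* Main.v *)
Require Import Defs.
From HB Require Import structures.
From mathcomp Require Import all_boot all_order all_algebra.
From mathcomp Require Import reals.
From mathcomp.real_closed Require Import complex.
From mathcomp Require Import ring lra zify.
From Stdlib Require Import FunctionalExtensionality.
Import Order.TTheory GRing.Theory Num.Theory.
Local Open Scope ring_scope.
Local Open Scope complex_scope.

Section S.
Variable F : nzRingType.

Lemma sum_only n jj (G : nat -> F) :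
  (forall i : nat, (i < n)%N -> i <> jj -> G i = 0) ->
  \sum_(i < n) G i = if (jj < n)%N then G jj else 0.
Proof.
move=> H; case: ifP => Hj.
  rewrite (bigD1 (Ordinal Hj)) //= big1 ?addr0 // => i /eqP ne.
  apply: H => // E; apply: ne; apply: val_inj; exact: E.
by rewrite big1 // => i _; apply: H => // E; move: (ltn_ord i); rewrite E Hj.
Qed.

Lemma Sum4_if n1 n2 n3 n4 (P : nat -> nat -> nat -> nat -> bool) (v : F) a b c d :
  (forall i j k m, P i j k m -> [/\ i = a, j = b, k = c & m = d]) ->
  (P a b c d -> [/\ (a < n1)%N, (b < n2)%N, (c < n3)%N & (d < n4)%N]) ->
  \sum_(i < n1) \sum_(j < n2) \sum_(k < n3) \sum_(m < n4)
     (if P i j k m then v else 0) = if P a b c d then v else 0.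
Proof.
move=> H; case: (boolP (P a b c d)) => HP; last first.
  move=> _; rewrite big1 // => i _; rewrite big1 // => j _; rewrite big1 // => k _; rewrite big1 // => m _.
  case: ifP => // HP'; have [??? ?] := H _ _ _ _ HP'; subst.
  by rewrite HP' in HP.
move=> /(_ isT) [ha hb hc hd].
rewrite (@sum_only n1 a (fun i => \sum_(j < n2) \sum_(k < n3) \sum_(m < n4) (if P i j k m then v else 0))); last first.
  move=> i _ ne; rewrite big1 // => j _; rewrite big1 // => k _; rewrite big1 // => m _.
  by case: ifP => // /H [].
rewrite ha (@sum_only n2 b (fun j => \sum_(k < n3) \sum_(m < n4) (if P a j k m then v else 0))); last first.
  move=> j _ ne; rewrite big1 // => k _; rewrite big1 // => m _.
  by case: ifP => // /H [].
rewrite hb (@sum_only n3 c (fun k => \sum_(m < n4) (if P a b k m then v else 0))); last first.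
  move=> k _ ne; rewrite big1 // => m _.
  by case: ifP => // /H [].
rewrite hc (@sum_only n4 d (fun m => (if P a b c m then v else 0))); last first.
  move=> m _ ne; by case: ifP => // /H [].
by rewrite hd HP.
Qed.

Lemma Sum4D n1 n2 n3 n4 (G H : nat -> nat -> nat -> nat -> F) :
  \sum_(i < n1) \sum_(j < n2) \sum_(k < n3) \sum_(m < n4) (G i j k m + H i j k m) =
  \sum_(i < n1) \sum_(j < n2) \sum_(k < n3) \sum_(m < n4) G i j k m +
  \sum_(i < n1) \sum_(j < n2) \sum_(k < n3) \sum_(m < n4) H i j k m.
Proof.
rewrite -big_split; apply: eq_bigr => i _.
rewrite -big_split; apply: eq_bigr => j _.
rewrite -big_split; apply: eq_bigr => k _.
by rewrite -big_split.
Qed.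
End S.

Lemma summand_decomp (R : realType) (Q : series R) l p q p1 q1 q2 k : (p1 <= p)%N ->
 (if (q1 + q2 + k == q)%N then Q p1 q1 * a_minus_lb l (p - p1 + k)%N q2 * @reord R q1 (p - p1 + k) k else 0)
 = (if [&& (q1+q2+k == q)%N, (0<p)%N, p1 == p.-1, q1 == q, q2 == 0%N & k == 0%N] then Q p.-1 q else 0)
 + (if [&& (q1+q2+k == q)%N, (0<q)%N, p1 == p, q1 == q.-1, q2 == 0%N & k == 1%N] then - (q.-1)%:R * Q p q.-1 else 0)
 + (if [&& (q1+q2+k == q)%N, (0<q)%N, p1 == p, q1 == q.-1, q2 == 1%N & k == 0%N] then - l * Q p q.-1 else 0).
Proof.
move=> H; have [d ->] : exists d, p = (p1 + d)%N by exists (p - p1)%N; rewrite subnKC.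
rewrite addKn.
case: (boolP ((q1+q2+k == q)%N)) => Hq; last by rewrite !addr0.
move/eqP: Hq => <-.
rewrite /a_minus_lb /sa /sb /reord.
case: d => [|[|d]]; case: k => [|[|k]]; case: q2 => [|[|q2]] => /=.
all: repeat (case: ifP; intro).
all: try (exfalso; lia).
all: rewrite ?addn0 ?addn1 ?add0n ?add1n /= ?big_ord0 ?big_ord1 ?bin0 ?binn ?expr0 ?expr1 /=.
all: rewrite ?mulr0 ?subr0 ?mul0r ?addr0 ?add0r ?sub0r ?mulr1 ?mul1r ?addn0 //.
all: rewrite ?mulr0 ?mul0r //.
all: ring.
Qed.

Definition G1 (R : realType) (Q : series R) (p q i j k m : nat) : R[i] :=
  if [&& (j+k+m == q)%N, (0<p)%N, i == p.-1, j == q, k == 0%N & m == 0%N] then Q p.-1 q else 0.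
Definition G2 (R : realType) (Q : series R) (p q i j k m : nat) : R[i] :=
  if [&& (j+k+m == q)%N, (0<q)%N, i == p, j == q.-1, k == 0%N & m == 1%N] then - (q.-1)%:R * Q p q.-1 else 0.
Definition G3 (R : realType) (Q : series R) l (p q i j k m : nat) : R[i] :=
  if [&& (j+k+m == q)%N, (0<q)%N, i == p, j == q.-1, k == 1%N & m == 0%N] then - l * Q p q.-1 else 0.

Lemma smul_formula (R : realType) (Q : series R) l p q :
  smul Q (a_minus_lb l) p q =
  (if (0 < p)%N then Q p.-1 q else 0) + (if (0 < q)%N then - (q.-1)%:R * Q p q.-1 else 0)
  + (if (0 < q)%N then - l * Q p q.-1 else 0).
Proof.
rewrite /smul.
rewrite (eq_bigr (fun p1 : 'I_p.+1 => \sum_(q1 < q.+1) \sum_(q2 < q.+1) \sum_(k < q.+1)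
  ((@G1 R Q p q p1 q1 q2 k + @G2 R Q p q p1 q1 q2 k) + @G3 R Q l p q p1 q1 q2 k))); last first.
  move=> p1 _; apply: eq_bigr => q1 _; apply: eq_bigr => q2 _; apply: eq_bigr => k _.
  by apply: summand_decomp; rewrite -ltnS.
rewrite (@Sum4D _ _ _ _ _ (fun i j k m => @G1 R Q p q i j k m + @G2 R Q p q i j k m) (@G3 R Q l p q)).
rewrite (@Sum4D _ _ _ _ _ (@G1 R Q p q) (@G2 R Q p q)).
rewrite /G1 /G2 /G3.
rewrite (@Sum4_if _ _ _ _ _ (fun p1 q1 q2 k => [&& (q1+q2+k == q)%N, (0<p)%N, p1 == p.-1, q1 == q, q2 == 0%N & k == 0%N]) _ p.-1 q 0 0); first last.
- by move=> /and5P [/eqP ? ? ? ? ?]; split; lia.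
- by move=> i j k m /and5P [_ _ /eqP -> /eqP -> /andP [/eqP -> /eqP ->]].
rewrite (@Sum4_if _ _ _ _ _ (fun p1 q1 q2 k => [&& (q1+q2+k == q)%N, (0<q)%N, p1 == p, q1 == q.-1, q2 == 0%N & k == 1%N]) _ p q.-1 0 1); first last.
- by move=> /and5P [/eqP ? ? ? ? ?]; split; lia.
- by move=> i j k m /and5P [_ _ /eqP -> /eqP -> /andP [/eqP -> /eqP ->]].
rewrite (@Sum4_if _ _ _ _ _ (fun p1 q1 q2 k => [&& (q1+q2+k == q)%N, (0<q)%N, p1 == p, q1 == q.-1, q2 == 1%N & k == 0%N]) _ p q.-1 1 0); first last.
- by move=> /and5P [/eqP ? ? ? ? ?]; split; lia.
- by move=> i j k m /and5P [_ _ /eqP -> /eqP -> /andP [/eqP -> /eqP ->]].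
congr (_ + _ + _).
- by case: p => [|p]; rewrite /= ?addn0 ?eqxx.
- by case: q => [|q]; rewrite /= ?addn0 ?addn1 ?eqxx.
- by case: q => [|q]; rewrite /= ?addn0 ?addn1 ?eqxx.
Qed.

Lemma normc_ge0 (R : realType) (z : R[i]) : 0 <= Normc.normc z.
Proof. by case: z => a b; exact: sqrtr_ge0. Qed.

Lemma normE (R : realType) (z : R[i]) (b : R) : (`|z| <= b%:C) = (Normc.normc z <= b).
Proof. exact: lecR. Qed.

Lemma normc_nat (R : realType) (n : nat) : Normc.normc (n%:R : R[i]) = n%:R.
Proof. by rewrite normcMn Normc.normc1. Qed.

Lemma step (R : realType) (x y l : R[i]) (K : R) (q : nat) :
  0 <= K ->
  Normc.normc x <= K * (q.+1)%:R ->
  Normc.normc y <= K * (2 * (1 + Normc.normc l)) ^+ q ->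
  Normc.normc (x + (q%:R + l) * y) <= K * (q.+1)%:R * (2 * (1 + Normc.normc l)) ^+ q.+1.
Proof.
move=> K0 hx hy.
set L := 1 + Normc.normc l.
have L1 : 1 <= L by rewrite /L lerDl normc_ge0.
set T := (2 * L) ^+ q.
have T1 : 1 <= T by rewrite /T exprn_ege1 //; lra.
rewrite exprS -/T.
have h1 := le_normcD x ((q%:R + l) * y).
rewrite Normc.normcM in h1.
have h2 : Normc.normc (q%:R + l) <= q%:R + L.
  apply: le_trans (le_normcD _ _) _; rewrite normc_nat /L; lra.
have h3 : Normc.normc (q%:R + l) * Normc.normc y <= (q%:R + L) * (K * T).
  by apply: ler_pM => //; apply: normc_ge0.
have q0 : 0 <= (q%:R : R) by apply: ler0n.
have hb : 0 <= K * ((T - 1) * (q%:R * (2 * L - 1) + L) + (2 * q%:R * (L - 1) + (L - 1))).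
  apply: mulr_ge0 => //; apply: addr_ge0; first apply: mulr_ge0.
  - lra.
  - nra.
  - nra.
rewrite -addn1 natrD.
apply: le_trans h1 _.
nra.
Qed.

Fixpoint Qf (R : realType) (X : series R) (l : R[i]) (q : nat) (p : nat) : R[i] :=
  match q with
  | 0 => X p.+1 0%N
  | q'.+1 => X p.+1 q'.+1 + (q'%:R + l) * Qf R X l q' p.+1
  end.
Arguments Qf {R}.

Lemma Qf_bound (R : realType) (X : series R) (l : R[i]) (c r : R) :
  0 <= c -> 0 <= r ->
  (forall p q, Normc.normc (X p q) <= c * r ^+ (p + q) * (q`!)%:R) ->
  forall q p, Normc.normc (Qf X l q p) <=
     c * r ^+ (p + q + 1) * (q`!)%:R * (2 * (1 + Normc.normc l)) ^+ q.
Proof.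
move=> c0 r0 hX; elim=> [|q IH] p /=.
  rewrite expr0 mulr1 addn0 addn1; have := hX p.+1 0%N; rewrite addn0 /=.
  by [].
have K0 : 0 <= c * r ^+ (p + q + 2) * (q`!)%:R.
  by rewrite mulr_ge0 ?ler0n // mulr_ge0 // exprn_ge0.
have := @step R (X p.+1 q.+1) (Qf X l q p.+1) l _ q K0.
have -> : (p + q.+1 + 1 = p + q + 2)%N by lia.
rewrite factS natrM.
have -> : c * r ^+ (p + q + 2) * ((q.+1)%:R * (q`!)%:R) * (2 * (1 + Normc.normc l)) ^+ q.+1
  = c * r ^+ (p + q + 2) * (q`!)%:R * (q.+1)%:R * (2 * (1 + Normc.normc l)) ^+ q.+1 by ring.
apply.
  apply: le_trans (hX _ _) _.
  have -> : (p.+1 + q.+1 = p + q + 2)%N by lia.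
  by rewrite factS natrM le_eqVlt; apply/orP; left; apply/eqP; ring.
apply: le_trans (IH _) _.
have -> : (p.+1 + q + 1 = p + q + 2)%N by lia.
by [].
Qed.

Theorem proposition1p2p3 (R : realType) (X : series R) (l : R[i]) :
  in_Aconv X ->
  exists Q Rm : series R,
    [/\ in_Aconv Q, in_B Rm, X = sadd (smul Q (a_minus_lb l)) Rm &
     forall Q' Rm' : series R, in_Aconv Q' -> in_B Rm' ->
       X = sadd (smul Q' (a_minus_lb l)) Rm' -> Q' = Q /\ Rm' = Rm].
Proof.
move=> [r [c [r1 [c0 hX]]]].
have hX' : forall p q, Normc.normc (X p q) <= c * r ^+ (p + q) * (q`!)%:R.
  by move=> p q; rewrite -normE; exact: hX.
have r0 : 0 <= r by lra.
have c0' : 0 <= c by lra.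
have QB := @Qf_bound R X l c r c0' r0 hX'.
set L := 1 + Normc.normc l.
have L1 : 1 <= L by rewrite /L lerDl normc_ge0.
pose Q : series R := fun p q => Qf X l q p.
pose Rm : series R := fun p q => if p == 0%N then
   X 0%N q + (if q is q'.+1 then (q'%:R + l) * Qf X l q' 0%N else 0) else 0.
have HE : X = sadd (smul Q (a_minus_lb l)) Rm.
  apply: functional_extensionality => p; apply: functional_extensionality => q.
  rewrite /sadd smul_formula /Rm /Q.
  case: p => [|p]; case: q => [|q] /=; rewrite ?mulr0 ?addr0 ?add0r //; ring.
exists Q, Rm; split.
- exists (2 * L * r), (c * r); have hLr : 0 <= (L - 1) * r by apply: mulr_ge0; lra.
  split; first nra.
  split; first by apply: mulr_gt0; lra.
  move=> p q; rewrite normE /Q.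
  apply: le_trans (QB q p) _.
  rewrite exprMn exprMn -exprMn.
  have -> : (p + q + 1 = (p + q).+1)%N by lia.
  rewrite exprSr.
  have -> : ((2 * L) ^+ (p + q) = (2 * L) ^+ p * (2 * L) ^+ q) by rewrite exprD.
  have T1 : 1 <= (2 * L) ^+ p by rewrite exprn_ege1 //; lra.
  have T0 : 0 <= (2 * L) ^+ q by rewrite exprn_ge0 //; lra.
  have R0 : 0 <= r ^+ (p + q) by rewrite exprn_ge0.
  have F0 : 0 <= (q`!)%:R :> R by apply: ler0n.
  set A := c * (r ^+ (p + q) * r) * (q`!)%:R * (2 * L) ^+ q.
  have A0 : 0 <= A by rewrite /A !mulr_ge0 //; lra.
  have -> : c * r * ((2 * L) ^+ p * (2 * L) ^+ q * r ^+ (p + q)) * (q`!)%:R = A * (2 * L) ^+ p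
    by rewrite /A; ring.
  nra.
- split.
    by move=> [|p] q.
  exists c, (2 * L * r) => q; rewrite normE /Rm /=.
  case: q => [|q].
    rewrite addr0 expr0 mulr1; have := hX' 0%N 0%N.
    by rewrite addn0 expr0 mulr1 fact0 mulr1.
  have K0 : 0 <= c * r ^+ q.+1 * (q`!)%:R.
    by rewrite mulr_ge0 ?ler0n // mulr_ge0 // exprn_ge0.
  have := @step R (X 0%N q.+1) (Qf X l q 0%N) l _ q K0.
  have -> : c * (2 * L * r) ^+ q.+1 * (q.+1`!)%:R = c * r ^+ q.+1 * (q`!)%:R * (q.+1)%:R * (2 * L) ^+ q.+1.
    by rewrite factS natrM exprMn; ring.
  apply.
    apply: le_trans (hX' _ _) _.
    by rewrite add0n factS natrM le_eqVlt; apply/orP; left; apply/eqP; ring.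
  apply: le_trans (QB _ _) _.
  by rewrite add0n addn1.
- exact: HE.
move=> Q' Rm' _ [HB0 _] HX.
have EQ : forall q p, Q' p q = Q p q.
  elim=> [|q IH] p.
    have := f_equal (fun f => f p.+1 0%N) HX.
    rewrite /sadd smul_formula HB0 //= /Q /=.
    by rewrite !addr0 => ->.
  have := f_equal (fun f => f p.+1 q.+1) HX.
  rewrite /sadd smul_formula HB0 //= /Q /= IH /Q => ->.
  ring.
have EQ' : Q' = Q.
  by apply: functional_extensionality => p; apply: functional_extensionality => q; apply: EQ.
split => //.
apply: functional_extensionality => p; apply: functional_extensionality => q.
have h1 := f_equal (fun f => f p q) HX.
have h2 := f_equal (fun f => f p q) HE.
move: h1 h2; rewrite /sadd EQ' /= => -> /addrI.
by [].
Qed.
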